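(* Let $G$ and $H$ be fermionic groups. Suppose $(-1)^F_H\neq 1$ in $H$, and let $H_b:=H/\langle(-1)^F_H\rangle$. Then \[ 1\to G\xrightarrow{i} G\otimes H\xrightarrow{\pi} H_b\to 1,\qquad i(g)=g\otimes 1,\quad \pi(g\otimes h)=[h], \] is an exact sequence of topological groups. If additionally the grading homomorphism $\theta_G$ of $G$ is nontrivial, then restricting to even parts gives an exact sequence \[ 1\to G_{ev}\xrightarrow{i}(G\otimes H)_{ev}\xrightarrow{\pi} H_b\to 1 . \] Here $G_{ev}=\ker\theta_G$, and $(G\otimes H)_{ev}$ is the kernel of the grading of $G\otimes H$.
   Context: A fermionic group is a topological group $G$ together with a central element $(-1)^F$ with $((-1)^F)^2=1$ and a continuous homomorphism $\theta:G\to\mathbb{Z}_2$ with $\theta((-1)^F)=0$. The fermionic tensor product $G\otimes H$ is the quotient space $(G\times H)/\langle((-1)^F_G,(-1)^F_H)\rangle$, with elements written $g\otimes h$. Its product is $(g_1\otimes h_1)(g_2\otimes h_2)=((-1)^F_G)^{\theta(g_2)\theta(h_1)}g_1g_2\otimes h_1h_2$. Its fermion parity is $(-1)^F_G\otimes 1$, and its grading is $\theta(g\otimes h)=\theta_G(g)+\theta_H(h)$. *)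

(* Defs.v *)
From HB Require Import structures.
From mathcomp Require Import all_boot all_order all_algebra generic_quotient.
From mathcomp Require Import all_classical.
From mathcomp Require Import topology_structure product_topology bool_topology quotient_topology subspace_topology.

Set Implicit Arguments.
Unset Strict Implicit.
Unset Printing Implicit Defensive.

Local Open Scope classical_set_scope.
Local Open Scope quotient_scope.

(* A fermionic group: a topological group G (explicit operations and axioms),
   a central element F = (-1)^F with F^2 = 1, and a continuous homomorphism
   theta : G -> Z_2 (Z_2 = bool with xor, discrete topology), theta F = 0. *)
Record fermionicGroup := FermionicGroup {
  fg_car :> topologicalType;
  fg_mul : fg_car -> fg_car -> fg_car;
  fg_one : fg_car;
  fg_inv : fg_car -> fg_car;
  fg_mulA : associative fg_mul;
  fg_mul1l : left_id fg_one fg_mul;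
  fg_mul1r : right_id fg_one fg_mul;
  fg_mulVl : left_inverse fg_one fg_inv fg_mul;
  fg_mulVr : right_inverse fg_one fg_inv fg_mul;
  fg_mul_cont : continuous (fun p : fg_car * fg_car => fg_mul p.1 p.2);
  fg_inv_cont : continuous fg_inv;
  fg_F : fg_car;
  fg_F_central : forall x, fg_mul fg_F x = fg_mul x fg_F;
  fg_F2 : fg_mul fg_F fg_F = fg_one;
  fg_theta : fg_car -> bool;
  fg_theta_mul : forall x y, fg_theta (fg_mul x y) = fg_theta x (+) fg_theta y;
  fg_theta_cont : continuous fg_theta;
  fg_theta_F : fg_theta fg_F = false
}.

Section Quotients.
Variables G H : fermionicGroup.

Lemma fg_FFx (K : fermionicGroup) (x : K) : fg_mul (fg_F K) (fg_mul (fg_F K) x) = x.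
Proof. by rewrite fg_mulA fg_F2 fg_mul1l. Qed.

Definition tens_r (p q : G * H) : bool :=
  (p == q) || (p == (fg_mul (fg_F G) q.1, fg_mul (fg_F H) q.2)).

Lemma tens_r_refl : reflexive tens_r.
Proof. by move=> p; rewrite /tens_r eqxx. Qed.

Lemma tens_r_sym : symmetric tens_r.
Proof.
move=> [a b] [c d]; rewrite /tens_r /=; apply/orP/orP => -[/eqP E|/eqP E].
- by left; rewrite E.
- by right; case: E => -> ->; rewrite !fg_FFx.
- by left; rewrite E.
- by right; case: E => -> ->; rewrite !fg_FFx.
Qed.

Lemma tens_r_trans : transitive tens_r.
Proof.
move=> [a b] [c d] [e f]; rewrite /tens_r /=.
case/orP=> /eqP[-> ->]; case/orP=> /eqP[-> ->];
  by rewrite ?fg_FFx eqxx ?orbT.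
Qed.

Canonical tens_equiv := EquivRel tens_r tens_r_refl tens_r_sym tens_r_trans.

Definition bos_r (p q : H) : bool := (p == q) || (p == fg_mul (fg_F H) q).

Lemma bos_r_refl : reflexive bos_r.
Proof. by move=> p; rewrite /bos_r eqxx. Qed.

Lemma bos_r_sym : symmetric bos_r.
Proof.
move=> a c; rewrite /bos_r; apply/orP/orP => -[/eqP E|/eqP E].
- by left; rewrite E.
- by right; rewrite E fg_FFx.
- by left; rewrite E.
- by right; rewrite E fg_FFx.
Qed.

Lemma bos_r_trans : transitive bos_r.
Proof.
move=> c a e; rewrite /bos_r.
case/orP=> /eqP->; case/orP=> /eqP->; by rewrite ?fg_FFx eqxx ?orbT.
Qed.

Canonical bos_equiv := EquivRel bos_r bos_r_refl bos_r_sym bos_r_trans.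

End Quotients.

(* G (x) H = (G x H)/<((-1)^F_G, (-1)^F_H)>, with the quotient topology *)
Definition tens (G H : fermionicGroup) : topologicalType :=
  quotient_topology {eq_quot tens_equiv G H}.

Definition bos (H : fermionicGroup) : topologicalType :=
  quotient_topology {eq_quot bos_equiv H}.

Section Ops.
Variables G H : fermionicGroup.

Definition Fpow (K : fermionicGroup) (b : bool) : K := if b then fg_F K else fg_one K.

Definition tens_mul (x y : tens G H) : tens G H :=
  let: (g1, h1) := repr x in let: (g2, h2) := repr y in
  \pi_(tens G H) (fg_mul (@Fpow G (@fg_theta G g2 && @fg_theta H h1)) (fg_mul g1 g2),
                  fg_mul h1 h2).

Definition tens_one : tens G H := \pi_(tens G H) (fg_one G, fg_one H).

Definition tens_theta (x : tens G H) : bool :=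
  @fg_theta G (repr x).1 (+) @fg_theta H (repr x).2.

Definition tens_incl (g : G) : tens G H := \pi_(tens G H) (g, fg_one H).

Definition tens_proj (x : tens G H) : bos H := \pi_(bos H) (repr x).2.

End Ops.

Definition bos_mul (H : fermionicGroup) (x y : bos H) : bos H :=
  \pi_(bos H) (fg_mul (repr x) (repr y)).
Definition bos_one (H : fermionicGroup) : bos H := \pi_(bos H) (fg_one H).

Definition fg_even (G : fermionicGroup) : set G := [set g | @fg_theta G g = false].
Definition tens_even (G H : fermionicGroup) : set (tens G H) :=
  [set z | tens_theta z = false].

(* A short exact sequence 1 -> A -> B -> C -> 1 of topological groups, where
   A and B are given as subgroups SA, SB (with the subspace topology) of
   ambient topological groups; C is the whole ambient group.
   i and p are continuous homomorphisms, i is injective, im i = ker p,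
   p is surjective. *)
Definition exact_seq_on {A B C : topologicalType}
  (mA : A -> A -> A) (mB : B -> B -> B) (mC : C -> C -> C) (oneC : C)
  (SA : set A) (SB : set B) (i : A -> B) (p : B -> C) : Prop :=
  i @` SA `<=` SB
  /\ {within SA, continuous i}
  /\ {within SB, continuous p}
  /\ (forall x y, SA x -> SA y -> i (mA x y) = mB (i x) (i y))
  /\ (forall x y, SB x -> SB y -> p (mB x y) = mC (p x) (p y))
  /\ (forall x y, SA x -> SA y -> i x = i y -> x = y)
  /\ (forall b, SB b -> (p b = oneC <-> exists2 a, SA a & i a = b))
    /\ (forall c, exists2 b, SB b & p b = c).

(* Main.v *)
Require Import Defs.
From HB Require Import structures.
From mathcomp Require Import all_boot all_order all_algebra generic_quotient.
From mathcomp Require Import all_classical.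
From mathcomp Require Import topology_structure product_topology bool_topology quotient_topology subspace_topology.

Local Open Scope classical_set_scope.

Section Helpers.
Local Open Scope quotient_scope.
Variables G H : fermionicGroup.

Lemma theta1 (K : fermionicGroup) : fg_theta (fg_one K) = false.
Proof. have := fg_theta_mul (fg_one K) (fg_one K); rewrite fg_mul1l; by case: fg_theta. Qed.

Lemma thetaF (K : fermionicGroup) (x : K) : fg_theta (fg_mul (fg_F K) x) = fg_theta x.
Proof. by rewrite fg_theta_mul fg_theta_F. Qed.

Lemma tens_eqP (p q : G * H) : \pi_(tens G H) p = \pi_(tens G H) q <-> tens_r p q.
Proof. split; [move/eqmodP => //| move=> h; apply/eqmodP => //]. Qed.
Lemma bos_eqP (p q : H) : \pi_(bos H) p = \pi_(bos H) q <-> bos_r p q.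
Proof. split; [move/eqmodP => //| move=> h; apply/eqmodP => //]. Qed.

Lemma repr_tens (p : G * H) : repr (\pi_(tens G H) p) = p \/
  repr (\pi_(tens G H) p) = (fg_mul (fg_F G) p.1, fg_mul (fg_F H) p.2).
Proof.
have : tens_r (repr (\pi_(tens G H) p)) p by apply/tens_eqP; rewrite reprK.
by case/orP => /eqP E; [left|right].
Qed.
Lemma repr_bos (p : H) : repr (\pi_(bos H) p) = p \/
  repr (\pi_(bos H) p) = fg_mul (fg_F H) p.
Proof.
have : bos_r (repr (\pi_(bos H) p)) p by apply/bos_eqP; rewrite reprK.
by case/orP => /eqP E; [left|right].
Qed.

Lemma tens_F (p : G * H) :
  \pi_(tens G H) (fg_mul (fg_F G) p.1, fg_mul (fg_F H) p.2) = \pi_(tens G H) p.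
Proof. apply/tens_eqP; by rewrite /tens_r eqxx orbT. Qed.
Lemma bos_F (h : H) : \pi_(bos H) (fg_mul (fg_F H) h) = \pi_(bos H) h.
Proof. apply/bos_eqP; by rewrite /bos_r eqxx orbT. Qed.

Lemma proj_pi (q : G * H) : tens_proj (\pi_(tens G H) q) = \pi_(bos H) q.2.
Proof. rewrite /tens_proj; case: (repr_tens q) => ->; by rewrite ?bos_F. Qed.

Lemma theta_pi (q : G * H) : tens_theta (\pi_(tens G H) q) = fg_theta q.1 (+) fg_theta q.2.
Proof. rewrite /tens_theta; case: (repr_tens q) => -> //=; by rewrite !thetaF. Qed.

Lemma bos_mul_pi (h1 h2 : H) :
  bos_mul (\pi_(bos H) h1) (\pi_(bos H) h2) = \pi_(bos H) (fg_mul h1 h2).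
Proof.
rewrite /bos_mul; case: (repr_bos h1) => ->; case: (repr_bos h2) => -> //.
- by rewrite fg_mulA -fg_F_central -fg_mulA bos_F.
- by rewrite -fg_mulA bos_F.
- rewrite fg_mulA -[fg_mul (fg_mul _ h1) _]fg_mulA -fg_F_central.
  by rewrite !fg_mulA fg_F2 fg_mul1l.
Qed.

Lemma incl_mul (x y : G) :
  tens_incl H (fg_mul x y) = tens_mul (tens_incl H x) (tens_incl H y).
Proof.
rewrite /tens_mul /tens_incl.
case: (repr_tens (x, fg_one H)) => ->; case: (repr_tens (y, fg_one H)) => -> /=;
  rewrite ?theta1 ?thetaF ?theta1 andbF /Fpow !fg_mul1l ?fg_mul1r //.
- have -> : fg_mul x (fg_mul (fg_F G) y) = fg_mul (fg_F G) (fg_mul x y).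
    by rewrite fg_mulA -fg_F_central -fg_mulA.
  by rewrite -(tens_F (fg_mul x y, fg_one H)) /= fg_mul1r.
- have -> : fg_mul (fg_mul (fg_F G) x) y = fg_mul (fg_F G) (fg_mul x y).
    by rewrite -fg_mulA.
  by rewrite -(tens_F (fg_mul x y, fg_one H)) /= fg_mul1r.
- have -> : fg_mul (fg_mul (fg_F G) x) (fg_mul (fg_F G) y) = fg_mul x y.
    by rewrite fg_mulA -[fg_mul (fg_mul _ x) _]fg_mulA -fg_F_central !fg_mulA fg_F2 fg_mul1l.
  by rewrite fg_F2.
Qed.

Lemma proj_mul (a b : tens G H) :
  tens_proj (tens_mul a b) = bos_mul (tens_proj a) (tens_proj b).
Proof.
rewrite /tens_mul /tens_proj; case: (repr a) => g1 h1; case: (repr b) => g2 h2 /=.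
by rewrite -/(tens_proj _) proj_pi bos_mul_pi.
Qed.

Lemma incl_inj (x y : G) : fg_F H <> fg_one H ->
  tens_incl H x = tens_incl H y -> x = y.
Proof.
move=> FH /tens_eqP; case/orP => /eqP [] // _ E.
by exfalso; apply: FH; rewrite E fg_mul1r.
Qed.

Lemma incl_cont : continuous (tens_incl H : G -> tens G H).
Proof.
move=> x; apply: (@continuous_comp _ _ _ (fun g : G => (g, fg_one H))).
  by apply: cvg_pair; [exact: cvg_id | exact: cvg_cst].
exact: pi_continuous.
Qed.

Lemma proj_cont : continuous (@tens_proj G H).
Proof.
apply/quotient_continuous.
have -> : (@tens_proj G H \o \pi_(tens G H)) = (\pi_(bos H) \o snd).
  by apply: funext => q /=; rewrite proj_pi.
move=> x; apply: continuous_comp; first exact: cvg_snd.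
exact: pi_continuous.
Qed.

Lemma kernel (b : tens G H) : tens_proj b = bos_one H <->
  exists a : G, (tens_theta b = fg_theta a) /\ tens_incl H a = b.
Proof.
rewrite -(reprK b); case: (repr b) => g h.
split.
- rewrite proj_pi /bos_one /=; move/bos_eqP; case/orP => /eqP ->.
  + by exists g; rewrite theta_pi /= theta1 addbF.
  + exists (fg_mul (fg_F G) g); rewrite theta_pi /= !thetaF theta1 addbF; split=>//.
    by rewrite /tens_incl -(tens_F (fg_mul (fg_F G) g, fg_one H)) /= fg_FFx.
- case=> a [_ <-]; by rewrite /tens_incl proj_pi.
Qed.

End Helpers.

Theorem mainTheorem4 (G H : fermionicGroup) :
  @fg_F H <> @fg_one H ->
  exact_seq_on (@fg_mul G) (@tens_mul G H) (@bos_mul H) (@bos_one H)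
    setT setT (@tens_incl G H) (@tens_proj G H)
  /\
  ((exists g : G, @fg_theta G g = true) ->
   exact_seq_on (@fg_mul G) (@tens_mul G H) (@bos_mul H) (@bos_one H)
     (@fg_even G) (@tens_even G H) (@tens_incl G H) (@tens_proj G H)).
Proof.
move=> FH; split.
  split; first by [].
  split; first exact: continuous_subspaceT (incl_cont G H).
  split; first exact: continuous_subspaceT (@proj_cont G H).
  split; first by move=> x y _ _; exact: incl_mul.
  split; first by move=> x y _ _; exact: proj_mul.
  split; first by move=> x y _ _; exact: incl_inj.
  split.
    move=> b _; rewrite kernel; split; first by case=> a [_ <-]; exists a.
    by case=> a _ <-; exists a; split=>//; rewrite /tens_incl theta_pi /= theta1 addbF.
  move=> c; exists ((\pi_(tens G H) (fg_one G, repr c))%qT) => //.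
  by rewrite proj_pi /= reprK.
case=> g0 Hg0.
split.
  move=> _ [a Ha <-]; rewrite /tens_even /= /tens_incl theta_pi /= theta1.
  by move: Ha; rewrite /fg_even /= => ->.
split; first exact: continuous_subspaceT (incl_cont G H).
split; first exact: continuous_subspaceT (@proj_cont G H).
split; first by move=> x y _ _; exact: incl_mul.
split; first by move=> x y _ _; exact: proj_mul.
split; first by move=> x y _ _; exact: incl_inj.
split.
  move=> b Hb; rewrite kernel; split.
    case=> a [E <-]; exists a => //; rewrite /fg_even /= -E; exact: Hb.
  by case=> a _ <-; exists a; split=>//; rewrite /tens_incl theta_pi /= theta1 addbF.
move=> c; pose h := repr c.
have [g Hg] : exists g : G, fg_theta g = fg_theta h.
  case E: (fg_theta h); first by exists g0.
  by exists (fg_one G); rewrite theta1.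
exists ((\pi_(tens G H) (g, h))%qT).
  by rewrite /tens_even /= theta_pi /= Hg addbb.
by rewrite proj_pi /= reprK.
Qed.
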